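(* Suppose $\mathfrak g(A)$ is integrable, and $A$ is elemental and indecomposable with $n\ge2$. Then, after multiplying rows of $A$ by suitable nonzero scalars, $A$ satisfies: (C1) $a_{ii}\in\{0,2\}$ for all $i\in I$; (C2) if $a_{ii}=0$ then $p(i)=1$; (C3) if $a_{ii}=2$ then $a_{ij}\in 2^{p(i)}\mathbb Z_{\le0}$ for all $j\neq i$; (C4) if $a_{ij}=0$ and $a_{ji}\ne0$ then $a_{ii}=0$.
   Context: Let $I=\{1,\dots,n\}$, let $A=(a_{ij})_{i,j\in I}$ be a complex $n\times n$ matrix and $p:I\to\mathbb Z_2$ a parity function. Fix a complex vector space $\mathfrak h$ of dimension $n+\operatorname{corank}(A)$, linearly independent $\alpha_1,\dots,\alpha_n\in\mathfrak h^*$ and $h_1,\dots,h_n\in\mathfrak h$ with $\alpha_j(h_i)=a_{ij}$. Let $\bar{\mathfrak g}(A)$ be the Lie superalgebra generated by $\mathfrak h$ (even, abelian) and elements $X_i,Y_i$ ($i\in I$) of parity $p(i)$ subject to $[h,X_i]=\alpha_i(h)X_i$, $[h,Y_i]=-\alpha_i(h)Y_i$, $[X_i,Y_j]=\delta_{ij}h_i$. The contragredient Lie superalgebra $\mathfrak g(A)$ is the quotient of $\bar{\mathfrak g}(A)$ by the unique maximal ideal meeting $\mathfrak h$ trivially; we keep writing $X_i,Y_i,h_i$ for the images. Multiplying rows of $A$ by nonzero scalars does not change $\mathfrak g(A)$ up to isomorphism. $\mathfrak g(A)$ is integrable if $\operatorname{ad}X_i$ is locally nilpotent on $\mathfrak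 g(A)$ for every $i\in I$. $A$ is elemental if it has no zero row; indecomposable if $I$ is not a disjoint union of nonempty $J,K$ with $a_{jk}=a_{kj}=0$ for $j\in J,k\in K$. *)

(* Defs.v *)
From HB Require Import structures.
From mathcomp Require Import all_boot all_order all_algebra.
Set Implicit Arguments. Unset Strict Implicit. Unset Printing Implicit Defensive.
Import Order.TTheory GRing.Theory Num.Theory.
Local Open Scope ring_scope.

Section Defs.
Variable R : numClosedFieldType.

(* ---------- Lie superalgebras ----------
   A Lie superalgebra structure on the R-module L is given by an idempotent
   linear map e : L -> L (projection onto the even part L_0 along the odd
   part L_1, so L = L_0 (+) L_1) and a bilinear bracket b, satisfying
   parity compatibility, super skew-symmetry and the super Jacobi identity
   on homogeneous elements.  Parities are booleans (true = odd). *)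

Variable L : lmodType R.

Definition homog (e : L -> L) (q : bool) (x : L) : Prop :=
  e x = (if q then 0 else x).

Definition lie_superalgebra (e : L -> L) (b : L -> L -> L) : Prop :=
  (forall (a : R) (x y : L), e (a *: x + y) = a *: e x + e y) /\
  (forall x, e (e x) = e x) /\
  (forall (a : R) (x y z : L), b (a *: x + y) z = a *: b x z + b y z) /\
  (forall (a : R) (x y z : L), b z (a *: x + y) = a *: b z x + b z y) /\
  (forall (q r : bool) (x y : L), homog e q x -> homog e r y ->
     homog e (q (+) r) (b x y)) /\
  (forall (q r : bool) (x y : L), homog e q x -> homog e r y ->
     b x y = - (((-1) ^+ (q && r)) *: b y x)) /\
  (forall (q r : bool) (x y z : L), homog e q x -> homog e r y ->
     b x (b y z) = b (b x y) z + ((-1) ^+ (q && r)) *: b y (b x z)).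

Definition subspace (S : L -> Prop) : Prop :=
  S 0 /\ forall (a : R) x y, S x -> S y -> S (a *: x + y).

Definition is_ideal (e : L -> L) (b : L -> L -> L) (J : L -> Prop) : Prop :=
  [/\ subspace J, forall x, J x -> J (e x)
    & forall x y, J y -> J (b x y) /\ J (b y x)].

End Defs.

Section Contragredient.
Variable R : numClosedFieldType.

Definition corank n (A : 'M[R]_n) : nat := (n - \rank A)%N.

(* Realization data: h = 'rV_d with d = n + corank A; alpha_j(u) = (u *m alpha^T) 0 j
   (row j of alpha represents the functional alpha_j); h_i = row i hh. *)
Definition realization n (A : 'M[R]_n) (alpha hh : 'M[R]_(n, n + corank A)) : Prop :=
  row_free alpha /\ hh *m alpha^T = A.

(* (L, e, b) together with iota : h -> L and X, Y is (isomorphic to) the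
   contragredient Lie superalgebra g(A): it is generated by iota(h), X_i, Y_i
   subject to the defining relations of gbar(A) (so it is a quotient of gbar(A)
   by an ideal meeting h trivially, as iota is injective), and it has no nonzero
   ideal meeting iota(h) trivially (so that ideal is the maximal one). *)
Definition contragredient n (A : 'M[R]_n) (p : 'I_n -> bool)
  (alpha hh : 'M[R]_(n, n + corank A)) (L : lmodType R)
  (e : L -> L) (b : L -> L -> L) (iota : 'rV[R]_(n + corank A) -> L)
  (X Y : 'I_n -> L) : Prop :=
  lie_superalgebra e b /\
      ((forall (a : R) u v, iota (a *: u + v) = a *: iota u + iota v) /\ injective iota) /\
      ((forall u, homog e false (iota u)) /\ (forall u v, b (iota u) (iota v) = 0)) /\
      ((forall u i, b (iota u) (X i) = (u *m alpha^T) 0 i *: X i) /\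
       (forall u i, b (iota u) (Y i) = - ((u *m alpha^T) 0 i *: Y i))) /\
      (forall i j, b (X i) (Y j) = if i == j then iota (row i hh) else 0) /\
      (forall i, homog e (p i) (X i) /\ homog e (p i) (Y i)) /\
      (forall S : L -> Prop, subspace S ->
         (forall u, S (iota u)) -> (forall i, S (X i) /\ S (Y i)) ->
         (forall x y, S x -> S y -> S (b x y)) -> forall x, S x) /\
      (forall J : L -> Prop, is_ideal e b J ->
         (forall u, J (iota u) -> u = 0) -> forall x, J x -> x = 0).

Definition integrable n (L : lmodType R) (b : L -> L -> L) (X : 'I_n -> L) : Prop :=
  forall i x, exists N : nat, iter N (b (X i)) x = 0.

Definition elemental n (A : 'M[R]_n) : Prop :=
  forall i, exists j, A i j != 0.

Definition indecomposable n (A : 'M[R]_n) : Prop :=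
  forall J : {set 'I_n}, J != set0 -> J != setT ->
    exists j k, [/\ j \in J, k \notin J & (A j k != 0) || (A k j != 0)].

Definition C1 n (A : 'M[R]_n) : Prop := forall i, A i i = 0 \/ A i i = 2%:R.
Definition C2 n (A : 'M[R]_n) (p : 'I_n -> bool) : Prop :=
  forall i, A i i = 0 -> p i = true.
Definition C3 n (A : 'M[R]_n) (p : 'I_n -> bool) : Prop :=
  forall i, A i i = 2%:R -> forall j, j != i ->
    exists k : nat, A i j = - ((2 ^ (p i) * k)%N%:R).
Definition C4 n (A : 'M[R]_n) : Prop :=
  forall i j, A i j = 0 -> A j i != 0 -> A i i = 0.

Definition rescale_rows n (c : 'I_n -> R) (A : 'M[R]_n) : 'M[R]_n :=
  \matrix_(i, j) (c i * A i j).

End Contragredient.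

Arguments realization {R n} A alpha hh.
Arguments contragredient {R n} A p alpha hh {L} e b iota X Y.

(* Main.v *)
Require Import Defs.
From HB Require Import structures.
From mathcomp Require Import all_boot all_order all_algebra.
Import Order.TTheory GRing.Theory Num.Theory.
Local Open Scope ring_scope.
From Stdlib Require Import Lia.

Fixpoint cseq {R : nzRingType} (s aij aii : R) (k : nat) : R :=
  match k with 0%N => 0 | k'.+1 => s * (@cseq R s aij aii k' - (aij + k'%:R * aii)) end.

Lemma b0l {R : nzRingType} {L : lmodType R} {b : L -> L -> L}
  (bL : forall (a : R) u v w, b (a*:u+v) w = a*: b u w + b v w) w : b 0 w = 0.
Proof. have := bL 1 0 0 w; rewrite !scale1r !addr0 => H. by apply: (addrI (b 0 w)); rewrite addr0 -H. Qed.

Lemma b0r {R : nzRingType} {L : lmodType R} {b : L -> L -> L}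
  (bR : forall (a : R) u v w, b w (a*:u+v) = a*: b w u + b w v) w : b w 0 = 0.
Proof. have := bR 1 0 0 w; rewrite !scale1r !addr0 => H. by apply: (addrI (b w 0)); rewrite addr0 -H. Qed.

Lemma bZl {R : nzRingType} {L : lmodType R} {b : L -> L -> L}
  (bL : forall (a : R) u v w, b (a*:u+v) w = a*: b u w + b v w) a u w : b (a *: u) w = a *: b u w.
Proof. by have := bL a u 0 w; rewrite addr0 (b0l bL) addr0. Qed.

Lemma bZr {R : nzRingType} {L : lmodType R} {b : L -> L -> L}
  (bR : forall (a : R) u v w, b w (a*:u+v) = a*: b w u + b w v) a u w : b w (a *: u) = a *: b w u.
Proof. by have := bR a u 0 w; rewrite addr0 (b0r bR) addr0. Qed.

Lemma bNl {R : nzRingType} {L : lmodType R} {b : L -> L -> L}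
  (bL : forall (a : R) u v w, b (a*:u+v) w = a*: b u w + b v w) u w : b (- u) w = - b u w.
Proof. by rewrite -scaleN1r (bZl bL) scaleN1r. Qed.

Lemma bNr {R : nzRingType} {L : lmodType R} {b : L -> L -> L}
  (bR : forall (a : R) u v w, b w (a*:u+v) = a*: b w u + b w v) u w : b w (- u) = - b w u.
Proof. by rewrite -scaleN1r (bZr bR) scaleN1r. Qed.

Lemma chain (R : nzRingType) (L : lmodType R) (b : L->L->L) (x y z0 hi : L) (s aij aii : R)
 (bL : forall (a : R) u v w, b (a*:u+v) w = a*: b u w + b v w)
 (bR : forall (a : R) u v w, b w (a*:u+v) = a*: b w u + b w v)
 (Hyx : b y x = - (s *: hi))
 (Jac : forall w, b y (b x w) = b (b y x) w + s *: b x (b y w))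
 (Hhx : b hi x = aii *: x) (Hhz: b hi z0 = aij *: z0)
 (Jh : forall w, b hi (b x w) = b (b hi x) w + b x (b hi w))
 (Hy0 : b y z0 = 0) :
 forall k, b y (iter k.+1 (b x) z0) = cseq s aij aii k.+1 *: iter k (b x) z0.
Proof.
have Hw : forall k, b hi (iter k (b x) z0) = (aij + k%:R * aii) *: iter k (b x) z0.
  elim=> [|k IH]; first by rewrite /= mul0r addr0.
  change (iter k.+1 (b x) z0) with (b x (iter k (b x) z0)).
  rewrite Jh IH Hhx (bZl bL) (bZr bR) -scalerDl; congr (_ *: _).
  by rewrite -nat1r mulrDl mul1r addrCA addrA.
elim=> [|k IH].
  rewrite /= Jac Hy0 (b0r bR) scaler0 addr0 Hyx (bNl bL) (bZl bL) Hhz.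
  by rewrite mul0r addr0 sub0r scalerA mulrN scaleNr.
change (iter k.+2 (b x) z0) with (b x (iter k.+1 (b x) z0)).
rewrite Jac IH (bZr bR) Hyx (bNl bL) (bZl bL) Hw.
rewrite scalerA -scaleNr scalerA -scalerDl; congr (_ *: _).
rewrite /=. set B := s * (cseq _ _ _ _ - _). by rewrite mulrBr addrC.
Qed.
Lemma keym {F : fieldType} {L : lmodType F} (b : L->L->L) (y : L) (v : nat -> L) (c : nat -> F)
  (Hy0 : b y 0 = 0) (H0 : v 0%N != 0) (HN : exists N, v N = 0)
  (Hc : forall k, b y (v k.+1) = c k.+1 *: v k) :
  exists m, [/\ (0 < m)%N, v m = 0 & c m = 0].
Proof.
have exP : exists N, v N == 0 by case: HN => N HN; exists N; apply/eqP.
case: (ex_minnP exP) => m /eqP Hm Hmin.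
case: m Hm Hmin => [|m] Hm Hmin; first by rewrite Hm eqxx in H0.
exists m.+1; split => //.
have Hvm : v m != 0.
  apply/negP => /eqP E; have := Hmin m; rewrite E eqxx ltnn => /(_ isT) //.
have := Hc m; rewrite Hm Hy0 => /esym/eqP; rewrite scaler_eq0 (negbTE Hvm) orbF.
by move/eqP.
Qed.
Lemma natid k : (k.+1 * k = k * k.-1 + k.*2)%N.
Proof. case: k => [|k] //=. rewrite -!mul2n -!multE -!plusE. simpl. lia. Qed.

Lemma cseq_even {R : nzRingType} (aij aii : R) k :
  (cseq 1 aij aii k) *+ 2 = -(aij *+ k.*2 + aii *+ (k * k.-1)).
Proof.
elim: k => [|k IH]; first by rewrite /= mul0rn !mulr0n addr0 oppr0.
rewrite /= mul1r mulrnBl IH natid doubleS mulr_natl mulrnDl -mulrnA muln2.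
rewrite -[k.*2.+2]addn2 !mulrnDr !opprD !addrA; congr (_ - _).
by rewrite (addrAC _ (- (aii *+ _))) (addrAC _ (- (aii *+ (k * k.-1)))).
Qed.

Lemma cseq_odd {R : nzRingType} (aij aii : R) t :
  cseq (-1) aij aii (t.*2) = aii *+ t /\ cseq (-1) aij aii (t.*2).+1 = aij + aii *+ t.
Proof.
elim: t => [|t [IH1 IH2]].
  by rewrite /= !mulr0n mul0r addr0 sub0r mulN1r opprK.
have E2 : cseq (-1) aij aii (t.+1.*2) = aii *+ t.+1.
  rewrite doubleS; change (cseq (-1) aij aii t.*2.+2) with ((-1) * (cseq (-1) aij aii t.*2.+1 - (aij + (t.*2.+1)%:R * aii))).
  rewrite IH2 mulN1r opprB mulr_natl -addnn -addSn mulrnDr.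
  by rewrite (addrC aij) addrKA addrK.
split => //.
change (cseq (-1) aij aii t.+1.*2.+1) with ((-1) * (cseq (-1) aij aii t.+1.*2 - (aij + (t.+1.*2)%:R * aii))).
by rewrite E2 mulN1r opprB mulr_natl -addnn mulrnDr addrA addrK.
Qed.

Lemma even_eq {R : numDomainType} (aij aii : R) m : (0 < m)%N ->
  cseq 1 aij aii m = 0 -> aij *+ 2 = - (aii *+ m.-1).
Proof.
move=> m0 H; have := cseq_even aij aii m; rewrite H mul0rn => /esym/eqP.
rewrite oppr_eq0 -muln2 mulnC mulrnA (mulnC m) mulrnA -mulrnDl mulrn_eq0 (negbTE (lt0n_neq0 m0)) /=.
by rewrite addr_eq0 => /eqP.
Qed.

Lemma even_conc {R : numFieldType} (aij aii : R) m : aii != 0 -> (0 < m)%N ->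
  cseq 1 aij aii m = 0 -> 2%:R / aii * aij = - ((m.-1)%:R).
Proof.
move=> a0 m0 H; have E := @even_eq _ _ _ _ m0 H.
by rewrite mulrAC mulr_natl E mulNr mulrnAl divff.
Qed.

Lemma even_zero {R : numDomainType} (aij : R) m : (0 < m)%N ->
  cseq 1 aij 0 m = 0 -> aij = 0.
Proof.
move=> m0 H; have := @even_eq _ _ _ _ m0 H; rewrite mul0rn oppr0 => /eqP.
by rewrite mulrn_eq0 /= => /eqP.
Qed.

Lemma odd_conc {R : numFieldType} (aij aii : R) m : aii != 0 -> (0 < m)%N ->
  cseq (-1) aij aii m = 0 -> exists t, m = (t.*2).+1 /\ 2%:R / aii * aij = - ((2 * t)%N%:R).
Proof.
move=> a0 m0 H; have Em := odd_double_half m.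
have [E1 E2] := cseq_odd aij aii m./2.
move: Em E1 E2; set t := m./2 => Em E1 E2.
move: Em; case: (odd m) => Em.
  exists t; split; first by rewrite -Em.
  move: H; rewrite -Em add1n E2 => /eqP; rewrite addr_eq0 => /eqP ->.
  by rewrite mulrN mulrnAr divfK // natrM mulr_natr.
exfalso; move: H; rewrite -Em add0n E1 => /eqP; rewrite mulrn_eq0 (negbTE a0) orbF.
move=> /eqP h; move: m0; rewrite -Em h //.
Qed.

Theorem lemma3p1 (R : numClosedFieldType) (n : nat) (A : 'M[R]_n)
  (p : 'I_n -> bool) (alpha hh : 'M[R]_(n, n + corank A))
  (L : lmodType R) (e : L -> L) (b : L -> L -> L)
  (iota : 'rV[R]_(n + corank A) -> L) (X Y : 'I_n -> L) :
  realization A alpha hh ->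
  contragredient A p alpha hh e b iota X Y ->
  integrable b X -> elemental A -> indecomposable A -> (2 <= n)%N ->
  exists c : 'I_n -> R, (forall i, c i != 0) /\
    let A' := rescale_rows c A in
    [/\ C1 A', C2 A' p, C3 A' p & C4 A'].
Proof.
move=> [Hfree HA] [[eL [eI [bL [bR [Hpar [Hskew Hjac]]]]]]
  [[iotaL iotaI] [[Hev Hcomm] [[HbX HbY] [HXY [Hhom [Hgen Hmax]]]]]]] Hint Hel Hind Hn.
have Aent : forall i j, (row i hh *m alpha^T) 0 j = A i j.
  by move=> i j; rewrite -row_mul HA mxE.
pose hi i := iota (row i hh).
have HhX : forall i j, b (hi i) (X j) = A i j *: X j by move=> i j; rewrite /hi HbX Aent.
have iota0 : iota 0 = 0.
  have := iotaL 1 0 0; rewrite !scale1r !addr0 => H.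
  by apply: (addrI (iota 0)); rewrite addr0 -H.
have Xnz : forall j, X j != 0.
  move=> j; apply/negP => /eqP Xj.
  have := HXY j j; rewrite eqxx Xj (b0l bL) => /esym; rewrite -iota0 => /iotaI rj.
  by case: (Hel j) => k; rewrite -Aent rj mul0mx mxE eqxx.
have HYX : forall i j, j != i -> b (Y i) (X j) = 0.
  move=> i j ji.
  by rewrite (Hskew (p i) (p j) _ _ (Hhom i).2 (Hhom j).1) HXY (negbTE ji) scaler0 oppr0.
have HYXi : forall i, b (Y i) (X i) = - (((-1) ^+ (p i && p i)) *: hi i).
  by move=> i; rewrite (Hskew (p i) (p i) _ _ (Hhom i).2 (Hhom i).1) HXY eqxx.
have Jh : forall i w, b (hi i) (b (X i) w) = b (b (hi i) (X i)) w + b (X i) (b (hi i) w).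
  by move=> i w; rewrite (Hjac false (p i) (hi i) (X i) w (Hev _) (Hhom i).1) /= expr0 scale1r.
have F : forall i j, j != i -> exists m, [/\ (0 < m)%N, iter m (b (X i)) (X j) = 0 &
    cseq ((-1) ^+ (p i && p i)) (A i j) (A i i) m = 0].
  move=> i j ji.
  have Hc := @chain _ _ b (X i) (Y i) (X j) (hi i) _ _ _ bL bR (HYXi i)
    (fun w => Hjac _ _ _ _ w (Hhom i).2 (Hhom i).1) (HhX i i) (HhX i j) (Jh i) (HYX i j ji).
  exact: (@keym _ _ b (Y i) (fun k => iter k (b (X i)) (X j)) (cseq _ (A i j) (A i i))
     (b0r bR _) (Xnz j) (Hint i (X j)) Hc).
pose c i := if A i i == 0 then 1 else 2%:R / A i i.
have two0 : (2%:R : R) != 0 by rewrite pnatr_eq0.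
have cnz : forall i, c i != 0.
  move=> i; rewrite /c; case: ifP => h; first exact: oner_neq0.
  by rewrite mulf_neq0 // invr_eq0 h.
exists c; split => //=.
have A'E : forall i j, rescale_rows c A i j = c i * A i j by move=> i j; rewrite mxE.
have cE : forall i, A i i != 0 -> c i = 2%:R / A i i by move=> i /negbTE h; rewrite /c h.
split.
- move=> i; rewrite A'E /c; case: ifP => /eqP nz.
    by left; rewrite nz mulr0.
  by right; rewrite divfK //; apply/eqP.
- move=> i; rewrite A'E => /eqP; rewrite mulf_eq0 (negbTE (cnz i)) /= => /eqP Aii.
  case pi: (p i) => //; exfalso.
  case: (Hel i) => j; apply/negP; rewrite negbK.
  case: (eqVneq j i) => [->|ji]; first by rewrite Aii.
  have [m [m0 _ Hm]] := F i j ji.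
  by move: Hm; rewrite pi /= expr0 Aii => /(@even_zero _ _ _ m0) ->.
- move=> i; rewrite A'E => H2 j ji.
  have Aii : A i i != 0.
    by apply/negP => /eqP h; move: H2; rewrite h mulr0 => /eqP; rewrite eq_sym (negbTE two0).
  rewrite A'E (cE _ Aii).
  have [m [m0 _ Hm]] := F i j ji.
  case pi: (p i) Hm => /= Hm.
    rewrite expr1 in Hm; have [t [_ ->]] := @odd_conc _ _ _ _ Aii m0 Hm.
    by exists t; rewrite expn1.
  rewrite expr0 in Hm; exists m.-1; rewrite expn0 mul1n.
  exact: @even_conc _ _ _ _ Aii m0 Hm.
- move=> i j; rewrite !A'E => /eqP; rewrite mulf_eq0 (negbTE (cnz i)) /= => /eqP Aij.
  rewrite mulf_eq0 (negbTE (cnz j)) /= => Aji.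
  apply/eqP; rewrite mulf_eq0; apply/orP; right; apply/negPn/negP => Aii.
  have ji : j != i by apply/negP => /eqP h; move: Aji Aij; rewrite h => /eqP.
  have [m [m0 vm Hm]] := F i j ji.
  have m1 : m = 1%N.
    case pi: (p i) Hm => /= Hm.
      rewrite expr1 in Hm; have [t [mt]] := @odd_conc _ _ _ _ Aii m0 Hm.
      rewrite Aij mulr0 => /eqP; rewrite eq_sym oppr_eq0 pnatr_eq0 muln_eq0 /= => /eqP t0.
      by rewrite mt t0.
    rewrite expr0 in Hm; have := @even_conc _ _ _ _ Aii m0 Hm.
    rewrite Aij mulr0 => /eqP; rewrite eq_sym oppr_eq0 pnatr_eq0 => /eqP.
    by case: m m0 {vm Hm} => [|[|m]].
  rewrite m1 /= in vm.
  have := Hjac (p j) (p i) (Y j) (X i) (X j) (Hhom j).2 (Hhom i).1.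
  have ij : i != j by rewrite eq_sym.
  rewrite vm (b0r bR) (HYX j i ij) (b0l bL) add0r (HYXi j) (bNr bR) (bZr bR).
  rewrite (Hskew (p i) false (X i) (hi j) (Hhom i).1 (Hev _)) andbF expr0 scale1r HhX.
  rewrite !scalerN !opprK !scalerA => /esym/eqP.
  rewrite scaler_eq0 (negbTE (Xnz i)) orbF !mulf_eq0 !signr_eq0 /=.
  by rewrite (negbTE Aji).
Qed.
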